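(* Let $g\in[\mathbb{F}_2,\mathbb{F}_2]$ and let $\alpha=\alpha_g=P_\alpha(x,y)X+Q_\alpha(x,y)Y$ be the corresponding cycle defined below. Let $k,l\ge0$ be integers and suppose $P_\alpha(x,y)=(x-1)^k(y-1)^l h(x,y)$ for a Laurent polynomial $h\in\mathbb{Z}[x^{\pm1},y^{\pm1}]$. If $g$ is a product of two squares in $\mathbb{F}_2$ (i.e. $g=a^2b^2$ with $a,b\in\mathbb{F}_2$), then $h(1,1)$ is even.
   Context: $\mathbb{F}_2$ is the free group on $x,y$. Let $\tilde K$ be the graph with vertex set $\mathbb{Z}^2$ and oriented edges $x^iy^jX$ from $(i,j)$ to $(i+1,j)$ and $x^iy^jY$ from $(i,j)$ to $(i,j+1)$ (the universal abelian cover of the wedge of two circles). A $1$-chain is written $\alpha=P_\alpha(x,y)X+Q_\alpha(x,y)Y$ with $P_\alpha,Q_\alpha$ integer Laurent polynomials (coefficient of $x^iy^j$ in $P_\alpha$ = coefficient of edge $x^iy^jX$, similarly for $Q_\alpha$). For $g\in[\mathbb{F}_2,\mathbb{F}_2]$ written as a word in $x^{\pm1},y^{\pm1}$, the cycle $\alpha_g$ is the $1$-cycle traced by the lattice path from $(0,0)$ in which $x,x^{-1},y,y^{-1}$ move by $(1,0),(-1,0),(0,1),(0,-1)$ along the corresponding edges, each edge counted with sign $+1$ if traversed in its orientation and $-1$ otherwise; it depends only on $g$. *)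

(* Defs.v *)
From mathcomp Require Import all_boot all_order all_algebra.
Set Implicit Arguments. Unset Strict Implicit. Unset Printing Implicit Defensive.
Import Order.TTheory GRing.Theory Num.Theory.
Local Open Scope ring_scope.

Inductive gen := Gx | Gy.

(* A letter is a generator together with a flag: false = g, true = g^{-1}. *)
Definition letter := (gen * bool)%type.
Definition word := seq letter.

Definition inv_letter (c : letter) : letter := (c.1, ~~ c.2).
Definition inv_word (w : word) : word := rev (map inv_letter w).

Inductive fg_eq : word -> word -> Prop :=
  | fg_cancel (u v : word) (c : letter) :
      fg_eq (u ++ [:: c; inv_letter c] ++ v) (u ++ v)
  | fg_refl (u : word) : fg_eq u u
  | fg_sym (u v : word) : fg_eq u v -> fg_eq v u
  | fg_trans (u v t : word) : fg_eq u v -> fg_eq v t -> fg_eq u t.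

Definition comm_word (u v : word) : word :=
  inv_word u ++ inv_word v ++ u ++ v.

Definition in_commutator_subgroup (w : word) : Prop :=
  exists ps : seq (word * word),
    fg_eq w (flatten (map (fun p => comm_word p.1 p.2) ps)).

(* Coefficient of the edge x^i y^j X in the cycle traced by the lattice path of
   w starting at (a,b). *)
Fixpoint xchain (w : word) (a b i j : int) : int :=
  match w with
  | [::] => 0
  | (Gx, false) :: t =>
      (if (i == a) && (j == b) then 1 else 0) + xchain t (a + 1) b i j
  | (Gx, true) :: t =>
      (if (i == a - 1) && (j == b) then -1 else 0) + xchain t (a - 1) b i j
  | (Gy, false) :: t => xchain t a (b + 1) i j
  | (Gy, true) :: t => xchain t a (b - 1) i j
  end.

Definition P_alpha (w : word) (i j : int) : int := xchain w 0 0 i j.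

(* Integer Laurent polynomials in x, y, given as a finite formal sum of
   terms ((i,j), c) meaning c x^i y^j. *)
Definition laurent := seq ((int * int) * int).

Definition lcoef (h : laurent) (i j : int) : int :=
  \sum_(t <- h) (if (t.1.1 == i) && (t.1.2 == j) then t.2 else 0).

Definition leval11 (h : laurent) : int := \sum_(t <- h) t.2.

(* Coefficient functions of (x-1) f and (y-1) f. *)
Definition mul_xm1 (f : int -> int -> int) : int -> int -> int :=
  fun i j => f (i - 1) j - f i j.
Definition mul_ym1 (f : int -> int -> int) : int -> int -> int :=
  fun i j => f i (j - 1) - f i j.

Definition coef_factored (k l : nat) (h : laurent) : int -> int -> int :=
  iter k mul_xm1 (iter l mul_ym1 (lcoef h)).

(* Main.v *)
Require Import Defs.
From mathcomp Require Import all_boot all_order all_algebra.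
From mathcomp Require Import ring zify.
Set Implicit Arguments. Unset Strict Implicit. Unset Printing Implicit Defensive.
Import Order.TTheory GRing.Theory Num.Theory.
Local Open Scope ring_scope.

Definition cw (w : int * int -> int) (L : laurent) : int := \sum_(t <- L) w t.1 * t.2.

Lemma cw_expand w (L : laurent) (S : seq (int * int)) :
  uniq S -> {subset map fst L <= S} ->
  cw w L = \sum_(p <- S) w p * lcoef L p.1 p.2.
Proof.
move=> uS sub; rewrite /cw /lcoef; symmetry.
under eq_bigr => p _ do rewrite mulr_sumr.
rewrite exchange_big /=; apply: eq_big_seq => t tL.
have tS : t.1 \in S by apply: sub; apply: map_f tL.
rewrite (bigD1_seq t.1) //= !eqxx /= big1_seq ?addr0 // => p /andP [np _].
case: ifP => [/andP [/eqP e1 /eqP e2]|]; last by rewrite mulr0.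
by move: np; rewrite [p]surjective_pairing -e1 -e2 -surjective_pairing eqxx.
Qed.

Lemma cw_lcoef w (L1 L2 : laurent) :
  (forall i j, lcoef L1 i j = lcoef L2 i j) -> cw w L1 = cw w L2.
Proof.
move=> H; set S := undup (map fst (L1 ++ L2)).
have uS : uniq S by apply: undup_uniq.
rewrite (@cw_expand w L1 S) ?(@cw_expand w L2 S) //.
- by apply: eq_bigr => p _; rewrite H.
- by move=> x xi; rewrite mem_undup map_cat mem_cat xi orbT.
- by move=> x xi; rewrite mem_undup map_cat mem_cat xi.
Qed.
Definition bin (i : int) (a : nat) : int :=
  match i with
  | Posz n => ('C(n, a))%:Z
  | Negz n => (-1) ^+ a * ('C(n + a, a))%:Z
  end.

Lemma bin0 i : bin i 0 = 1.
Proof. by case: i => n /=; rewrite ?bin0 ?addn0 ?bin0 ?expr0 ?mul1r. Qed.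

Lemma binP i a : bin (i + 1) a.+1 = bin i a.+1 + bin i a.
Proof.
case: i => [n|[|n]].
- have -> : Posz n + 1 = Posz n.+1 by rewrite -addn1 PoszD.
  by rewrite /= binS PoszD.
- have -> : Negz 0 + 1 = Posz 0 by [].
  rewrite /= bin0n add0n !binn exprS /=; ring.
- have -> : Negz n.+1 + 1 = Negz n by rewrite !NegzE; lia.
  rewrite /= addSn addnS binS !PoszD exprS; ring.
Qed.

Definition shift (p q : int) (L : laurent) : laurent :=
  [seq ((t.1.1 + p, t.1.2 + q), t.2) | t <- L].
Definition negL (L : laurent) : laurent := [seq (t.1, - t.2) | t <- L].
Definition mx (L : laurent) := shift 1 0 L ++ negL L.
Definition my (L : laurent) := shift 0 1 L ++ negL L.
Definition c (a b : nat) (L : laurent) := cw (fun p => bin p.1 a * bin p.2 b) L.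

Lemma c_cat a b L1 L2 : c a b (L1 ++ L2) = c a b L1 + c a b L2.
Proof. by rewrite /c /cw big_cat. Qed.

Lemma c_neg a b L : c a b (negL L) = - c a b L.
Proof. by rewrite /c /cw big_map -sumrN; apply: eq_bigr => t _ /=; rewrite mulrN. Qed.

Lemma c_mx a b L : c a b (mx L) = if a is a'.+1 then c a' b L else 0.
Proof.
rewrite c_cat c_neg /c /cw big_map -sumrB.
case: a => [|a]; [apply: big1 | apply: eq_bigr] => t _ /=;
  rewrite addr0 ?bin0 ?binP; ring.
Qed.

Lemma c_my a b L : c a b (my L) = if b is b'.+1 then c a b' L else 0.
Proof.
rewrite c_cat c_neg /c /cw big_map -sumrB.
case: b => [|b]; [apply: big1 | apply: eq_bigr] => t _ /=;
  rewrite addr0 ?bin0 ?binP; ring.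
Qed.

Lemma eq_m1 (x i : int) : (x + 1 == i) = (x == i - 1).
Proof. by apply/idP/idP => /eqP H; apply/eqP; lia. Qed.

Lemma lcoef_neg L i j : lcoef (negL L) i j = - lcoef L i j.
Proof.
rewrite /lcoef big_map -sumrN; apply: eq_bigr => t _ /=.
by case: ifP; rewrite ?oppr0.
Qed.

Lemma lcoef_mx L i j : lcoef (mx L) i j = mul_xm1 (lcoef L) i j.
Proof.
rewrite /mx /lcoef big_cat /= -/(lcoef (negL L) i j) lcoef_neg /mul_xm1 /lcoef.
by rewrite big_map; congr (_ - _); apply: eq_bigr => t _ /=; rewrite addr0 eq_m1.
Qed.

Lemma lcoef_my L i j : lcoef (my L) i j = mul_ym1 (lcoef L) i j.
Proof.
rewrite /my /lcoef big_cat /= -/(lcoef (negL L) i j) lcoef_neg /mul_ym1 /lcoef.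
by rewrite big_map; congr (_ - _); apply: eq_bigr => t _ /=; rewrite addr0 eq_m1.
Qed.

Lemma lcoef_iter k l h i j :
  lcoef (iter k mx (iter l my h)) i j = coef_factored k l h i j.
Proof.
rewrite /coef_factored.
elim: k i j => [|k IH] i j /=.
  elim: l i j => [|l IHl] i j //=.
  by rewrite lcoef_my /mul_ym1 !IHl.
by rewrite lcoef_mx /mul_xm1 !IH.
Qed.

Lemma c_iterx k a b L :
  c a b (iter k mx L) = if (k <= a)%N then c (a - k) b L else 0.
Proof.
elim: k a => [|k IH] a /=; first by rewrite subn0.
rewrite c_mx; case: a => [|a] //; by rewrite IH subSS.
Qed.

Lemma c_itery l a b L :
  c a b (iter l my L) = if (l <= b)%N then c a (b - l) L else 0.
Proof.
elim: l b => [|l IH] b /=; first by rewrite subn0.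
rewrite c_my; case: b => [|b] //; by rewrite IH subSS.
Qed.

Lemma c00 h : c 0 0 h = leval11 h.
Proof. by rewrite /c /cw /leval11; apply: eq_bigr => t _; rewrite !bin0 !mul1r. Qed.

Lemma shift_shift p q p' q' L : shift p q (shift p' q' L) = shift (p' + p) (q' + q) L.
Proof. by rewrite /shift -map_comp; apply: eq_map => t /=; rewrite !addrA. Qed.

Lemma shift00 L : shift 0 0 L = L.
Proof. by elim: L => [|[[x y] z] L IH] //=; rewrite IH !addr0. Qed.

Lemma shift_cat p q L1 L2 : shift p q (L1 ++ L2) = shift p q L1 ++ shift p q L2.
Proof. by rewrite /shift map_cat. Qed.

Lemma c_shiftx a b L :
  c a b (shift 1 0 L) = c a b L + (if a is a'.+1 then c a' b L else 0).
Proof. have := c_mx a b L; rewrite /mx c_cat c_neg => H; rewrite -H; ring. Qed.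

Lemma c_shifty a b L :
  c a b (shift 0 1 L) = c a b L + (if b is b'.+1 then c a b' L else 0).
Proof. have := c_my a b L; rewrite /my c_cat c_neg => H; rewrite -H; ring. Qed.

Definition Zbelow (a b : nat) (F : laurent) :=
  forall a' b', (a' <= a)%N -> (b' <= b)%N -> (a' + b' < a + b)%N -> c a' b' F = 0.

Definition Q (F G : laurent) :=
  forall a b, Zbelow a b F -> Zbelow a b G /\ c a b G = c a b F.

Lemma Q_refl F : Q F F.
Proof. by []. Qed.

Lemma Q_trans F G H : Q F G -> Q G H -> Q F H.
Proof.
move=> QFG QGH a b Z; have [Z1 E1] := QFG a b Z; have [Z2 E2] := QGH a b Z1.
by split => //; rewrite E2.
Qed.

Lemma Q_sx F : Q F (shift 1 0 F).
Proof.
move=> a b Z; split.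
- move=> a' b' ha hb hlt; rewrite c_shiftx Z //.
  case: a' ha hlt => [|a'] ha hlt //=; rewrite add0r; apply: Z; lia.
- rewrite c_shiftx; case: a Z => [|a] Z; first by rewrite addr0.
  by rewrite (Z a b) ?addr0 //; lia.
Qed.

Lemma Q_sy F : Q F (shift 0 1 F).
Proof.
move=> a b Z; split.
- move=> a' b' ha hb hlt; rewrite c_shifty Z //.
  case: b' hb hlt => [|b'] hb hlt //=; rewrite add0r; apply: Z; lia.
- rewrite c_shifty; case: b Z => [|b] Z; first by rewrite addr0.
  by rewrite (Z a b) ?addr0 //; lia.
Qed.

Lemma Q_sxinv F : Q F (shift (-1) 0 F).
Proof.
set G := shift (-1) 0 F.
have HG a b : c a b F = c a b G + (if a is a'.+1 then c a' b G else 0).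
  by rewrite -c_shiftx /G shift_shift addNr addr0 shift00.
move=> a b Z.
have ZG : forall a' b', (a' <= a)%N -> (b' <= b)%N -> (a' + b' < a + b)%N ->
    c a' b' G = 0.
  elim=> [|a' IH] b' ha hb hlt.
    by have := HG 0%N b'; rewrite Z // addr0 => <-.
  have e1 : c a' b' G = 0 by apply: IH; lia.
  by have := HG a'.+1 b'; rewrite Z // e1 addr0 => <-.
split => //.
rewrite HG; case: a Z ZG => [|a] Z ZG; first by rewrite addr0.
by rewrite (ZG a b) ?addr0 //; lia.
Qed.

Lemma Q_syinv F : Q F (shift 0 (-1) F).
Proof.
set G := shift 0 (-1) F.
have HG a b : c a b F = c a b G + (if b is b'.+1 then c a b' G else 0).
  by rewrite -c_shifty /G shift_shift addNr addr0 shift00.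
move=> a b Z.
have ZG : forall b' a', (a' <= a)%N -> (b' <= b)%N -> (a' + b' < a + b)%N ->
    c a' b' G = 0.
  elim=> [|b' IH] a' ha hb hlt.
    by have := HG a' 0%N; rewrite Z // addr0 => <-.
  have e1 : c a' b' G = 0 by apply: IH; lia.
  by have := HG a' b'.+1; rewrite Z // e1 addr0 => <-.
split; first by move=> a' b' ha hb hlt; apply: ZG.
rewrite HG; case: b Z ZG => [|b] Z ZG; first by rewrite addr0.
by rewrite (ZG b a) ?addr0 //; lia.
Qed.

Lemma Q_shiftx (p : int) F : Q F (shift p 0 F).
Proof.
case: p => n.
- elim: n F => [|n IH] F; first by rewrite shift00; apply: Q_refl.
  have -> : shift n.+1 0 F = shift 1 0 (shift n 0 F).
    by rewrite shift_shift ?addr0 ?add0r -addn1 PoszD.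
  apply: (Q_trans (IH F)); exact: Q_sx.
- rewrite NegzE; elim: n.+1 F => {n} [|n IH] F.
    by rewrite oppr0 shift00; apply: Q_refl.
  have -> : shift (- (n.+1)%:Z) 0 F = shift (-1) 0 (shift (- n%:Z) 0 F).
    by rewrite shift_shift addr0; congr shift; lia.
  apply: (Q_trans (IH F)); exact: Q_sxinv.
Qed.

Lemma Q_shifty (q : int) F : Q F (shift 0 q F).
Proof.
case: q => n.
- elim: n F => [|n IH] F; first by rewrite shift00; apply: Q_refl.
  have -> : shift 0 n.+1 F = shift 0 1 (shift 0 n F).
    by rewrite shift_shift ?addr0 ?add0r -addn1 PoszD.
  apply: (Q_trans (IH F)); exact: Q_sy.
- rewrite NegzE; elim: n.+1 F => {n} [|n IH] F.
    by rewrite oppr0 shift00; apply: Q_refl.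
  have -> : shift 0 (- (n.+1)%:Z) F = shift 0 (-1) (shift 0 (- n%:Z) F).
    by rewrite shift_shift addr0; congr shift; lia.
  apply: (Q_trans (IH F)); exact: Q_syinv.
Qed.

Lemma Q_shift p q F : Q F (shift p q F).
Proof.
have -> : shift p q F = shift 0 q (shift p 0 F) by rewrite shift_shift addr0 add0r.
apply: (@Q_trans _ (shift p 0 F)); [exact: Q_shiftx | exact: Q_shifty].
Qed.

Fixpoint wl (w : word) (a b : int) : laurent :=
  match w with
  | [::] => [::]
  | (Gx, false) :: t => ((a, b), 1) :: wl t (a + 1) b
  | (Gx, true) :: t => ((a - 1, b), -1) :: wl t (a - 1) b
  | (Gy, false) :: t => wl t a (b + 1)
  | (Gy, true) :: t => wl t a (b - 1)
  end.

Fixpoint dx (w : word) : int :=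
  match w with
  | [::] => 0
  | (Gx, false) :: t => 1 + dx t
  | (Gx, true) :: t => -1 + dx t
  | _ :: t => dx t
  end.

Fixpoint dy (w : word) : int :=
  match w with
  | [::] => 0
  | (Gy, false) :: t => 1 + dy t
  | (Gy, true) :: t => -1 + dy t
  | _ :: t => dy t
  end.

Lemma lcoef_cat L1 L2 i j : lcoef (L1 ++ L2) i j = lcoef L1 i j + lcoef L2 i j.
Proof. by rewrite /lcoef big_cat. Qed.

Lemma lcoef_cons t L i j :
  lcoef (t :: L) i j = (if (t.1.1 == i) && (t.1.2 == j) then t.2 else 0) + lcoef L i j.
Proof. by rewrite /lcoef big_cons. Qed.

Lemma lcoef_wl w a b i j : lcoef (wl w a b) i j = xchain w a b i j.
Proof.
elim: w a b => [|[[] []] t IH] a b /=; rewrite ?lcoef_cons ?IH //=.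
- by rewrite /lcoef big_nil.
- by rewrite [a - 1 == i]eq_sym [b == j]eq_sym.
- by rewrite [a == i]eq_sym [b == j]eq_sym.
Qed.

Lemma dx_cat u v : dx (u ++ v) = dx u + dx v.
Proof. by elim: u => [|[[] []] t IH] /=; rewrite ?add0r ?IH ?addrA. Qed.

Lemma dy_cat u v : dy (u ++ v) = dy u + dy v.
Proof. by elim: u => [|[[] []] t IH] /=; rewrite ?add0r ?IH ?addrA. Qed.

Lemma wl_cat u v a b : wl (u ++ v) a b = wl u a b ++ wl v (a + dx u) (b + dy u).
Proof.
elim: u a b => [|[[] []] t IH] a b /=; rewrite ?addr0 ?IH ?addrA //.
Qed.

Lemma wl_shift w a b p q : wl w (a + p) (b + q) = shift p q (wl w a b).
Proof.
elim: w a b => [|[[] []] t IH] a b //=.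
- by rewrite -IH addrAC.
- by rewrite -IH addrAC.
- by rewrite -IH addrAC.
- by rewrite -IH addrAC.
Qed.

Lemma dx_cancel (c0 : letter) : dx [:: c0; inv_letter c0] = 0.
Proof. by case: c0 => [[] []] /=; rewrite ?addr0 // ?addNr ?subrr. Qed.

Lemma dy_cancel (c0 : letter) : dy [:: c0; inv_letter c0] = 0.
Proof. by case: c0 => [[] []] /=; rewrite ?addr0 // ?addNr ?subrr. Qed.

Lemma wl_cancel (c0 : letter) a b i j : lcoef (wl [:: c0; inv_letter c0] a b) i j = 0.
Proof.
rewrite /lcoef; case: c0 => [[] []] /=; rewrite ?big_cons ?big_nil //= ?addr0.
- by case: ifP => _; lia.
- have -> : a + 1 - 1 = a by lia.
  by case: ifP => _; lia.
Qed.

Lemma fg_inv u v : fg_eq u v ->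
  [/\ dx u = dx v, dy u = dy v &
      forall a b i j, lcoef (wl u a b) i j = lcoef (wl v a b) i j].
Proof.
elim=> {u v}.
- move=> u v c0; rewrite !dx_cat !dy_cat dx_cancel dy_cancel !add0r; split => // a b i j.
  rewrite !wl_cat !lcoef_cat wl_cancel dx_cancel dy_cancel.
  by rewrite !addr0 add0r.
- by [].
- by move=> u v _ [H1 H2 H3]; split => // a b i j; rewrite H3.
- move=> u v t _ [H1 H2 H3] _ [H4 H5 H6]; split; [by rewrite H1 | by rewrite H2 |].
  by move=> a b i j; rewrite H3 H6.
Qed.

Lemma dx_rev w : dx (rev w) = dx w.
Proof.
elim: w => [|x t IH] //; rewrite rev_cons -cats1 dx_cat IH.
by rewrite -[x :: t]/([:: x] ++ t) dx_cat addrC.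
Qed.

Lemma dy_rev w : dy (rev w) = dy w.
Proof.
elim: w => [|x t IH] //; rewrite rev_cons -cats1 dy_cat IH.
by rewrite -[x :: t]/([:: x] ++ t) dy_cat addrC.
Qed.

Lemma dx_invw w : dx (inv_word w) = - dx w.
Proof.
rewrite /inv_word dx_rev; elim: w => [|[[] []] t IH] /=; rewrite ?oppr0 ?IH //;
  rewrite opprD //.
Qed.

Lemma dy_invw w : dy (inv_word w) = - dy w.
Proof.
rewrite /inv_word dy_rev; elim: w => [|[[] []] t IH] /=; rewrite ?oppr0 ?IH //;
  rewrite opprD //.
Qed.

Lemma comm_d g : in_commutator_subgroup g -> dx g = 0 /\ dy g = 0.
Proof.
case=> ps /fg_inv [-> -> _].
elim: ps => [|[u v] ps [IH1 IH2]] //=.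
rewrite /comm_word !dx_cat !dy_cat !dx_invw !dy_invw IH1 IH2 /=.
split; ring.
Qed.

Unset Implicit Arguments.

Theorem proposition5p1 (g : word) (k l : nat) (h : laurent) :
  in_commutator_subgroup g ->
  (forall i j : int, P_alpha g i j = coef_factored k l h i j) ->
  (exists a b : word, fg_eq g (a ++ a ++ b ++ b)) ->
  (2 %| leval11 h)%Z.
Proof.
move=> Hcomm HP [a [b Hg]].
have [Hdx Hdy] := comm_d Hcomm.
have [Gx1 Gy1 Gl] := fg_inv Hg.
rewrite !dx_cat Hdx in Gx1; rewrite !dy_cat Hdy in Gy1.
have Hbx : dx b = - dx a by lia.
have Hby : dy b = - dy a by lia.
set p := dx a in Hbx *; set q := dy a in Hby *.
set F := wl a 0 0 ++ wl b p q.
set FL := iter k mx (iter l my h).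
have Key : forall a' b', c a' b' FL = c a' b' F + c a' b' (shift p q F).
  move=> a' b'; rewrite -c_cat; apply: cw_lcoef => i j.
  rewrite lcoef_iter -HP /P_alpha -lcoef_wl Gl.
  rewrite !wl_cat !add0r Hbx Hby.
  have -> : p + p + - p = p by lia.
  have -> : q + q + - q = q by lia.
  rewrite /F !shift_cat -!wl_shift !add0r !lcoef_cat; ring.
have cFL : forall a' b', c a' b' FL =
    if (k <= a')%N then (if (l <= b')%N then c (a' - k) (b' - l) h else 0) else 0.
  by move=> a' b'; rewrite /FL c_iterx; case: ifP => //; rewrite c_itery.
have Claim : forall n a' b', (a' + b' < n)%N -> (a' < k)%N || (b' < l)%N ->
    c a' b' F = 0.
  elim=> [|n IH] a' b' hn hkl; first by [].
  have Z : Zbelow a' b' F.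
    move=> a'' b'' h1 h2 h3; apply: IH; first lia.
    case/orP: hkl => H; apply/orP; [left|right]; lia.
  have [_ E] := Q_shift p q Z.
  have := Key a' b'; rewrite E cFL.
  have -> : (if (k <= a')%N then (if (l <= b')%N then c (a' - k) (b' - l) h else 0) else 0) = 0.
    by case/orP: hkl => H; case: ifP => H1 //; case: ifP => H2 //; lia.
  lia.
have Z : Zbelow k l F.
  move=> a' b' h1 h2 h3; apply: (Claim (k + l)%N); first lia.
  apply/orP; lia.
have [_ E] := Q_shift p q Z.
have := Key k l; rewrite E cFL !leqnn !subnn c00 => ->.
by apply/dvdzP; exists (c k l F); lia.
Qed.
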